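(* Let $N\ge2$, $n\ge1$, $\tilde J>0$ and $J_i=\tilde J/N^i$ for $1\le i\le n$. For all integers $1\le s\le N$ and $0\le m\le n-1$, $$\max_{1\le i\le N^n}\mathcal H\big(h^{(m,s)};\gamma_i\big)=\max_{1\le i\le sN^m}\mathcal H\big(h^{(m,s)};\gamma_i\big).$$
   Context: Hierarchical lattice $\Lambda_N^n=\{1,\dots,N^n\}$ (integer $a$ = vertex $v_a$); $k$-blocks are $\{jN^k+1,\dots,(j+1)N^k\}$; $d(a,b)$ is the smallest $k\ge0$ with $a,b$ in a common $k$-block. For a field $h$, $\mathcal H(h;\sigma)=-\frac12\sum_{\{v,w\},v\ne w}J_{d(v,w)}\sigma(v)\sigma(w)-\frac h2\sum_v\sigma(v)$ (unordered pairs). $\gamma_k$ is the configuration with $+1$ exactly on $\{1,\dots,k\}$. For integers $m,s$, $h^{(m,s)}=\tilde J\big[(1-\frac1N)(n-m)-(s-1)\frac1N\big]$. *)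

(* Defs.v *)
From HB Require Import structures.
From mathcomp Require Import all_boot all_order all_algebra.
Set Implicit Arguments. Unset Strict Implicit. Unset Printing Implicit Defensive.
Import Order.TTheory GRing.Theory Num.Theory.
Local Open Scope ring_scope.

(* Vertices of Lambda_N^n are encoded 0-based: the ordinal a : 'I_(N^n)
   stands for the vertex v_{a+1}.  k-blocks {jN^k+1,...,(j+1)N^k} thus
   correspond to 0-based indices with equal quotient by N^k. *)

Definition hdist (N n : nat) (a b : nat) : nat :=
  \big[minn/n]_(k < n.+1 | (a %/ N ^ k == b %/ N ^ k)%N) (k : nat).

Definition coupling {R : realFieldType} (N : nat) (Jt : R) (i : nat) : R :=
  Jt / (N%:R ^+ i).

Definition hamiltonian {R : realFieldType} (N n : nat) (Jt h : R)
    (sigma : 'I_(N ^ n) -> R) : R :=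
  - (1 / 2) * (\sum_(v < N ^ n) \sum_(w < N ^ n | (v < w)%N)
        coupling N Jt (hdist N n v w) * sigma v * sigma w)
  - h / 2 * \sum_(v < N ^ n) sigma v.

(* gamma_k : +1 exactly on the vertices v_1..v_k, i.e. 0-based indices < k *)
Definition gamma {R : realFieldType} (N n k : nat) (v : 'I_(N ^ n)) : R :=
  if (v < k)%N then 1 else -1.

Definition hfield {R : realFieldType} (N n : nat) (Jt : R) (m s : nat) : R :=
  Jt * ((1 - 1 / N%:R) * (n%:R - m%:R) - (s%:R - 1) / N%:R).

(* max_{lo <= i <= hi} H(h; gamma_i), as an iterated Num.max seeded with
   H(h; gamma_lo) (the ranges used below are nonempty and contain lo). *)
Definition maxH {R : realFieldType} (N n : nat) (Jt h : R) (lo hi : nat) : R :=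
  \big[Num.max/@hamiltonian R N n Jt h (@gamma R N n lo)]_(lo <= i < hi.+1)
     @hamiltonian R N n Jt h (@gamma R N n i).

(* Main.v *)
Require Import Defs.
From HB Require Import structures.
From mathcomp Require Import all_boot all_order all_algebra.
From mathcomp Require Import zify ring lra.
Import Order.TTheory GRing.Theory Num.Theory.
Local Open Scope ring_scope.



Section NatAux.
Local Open Scope nat_scope.

Lemma divn_eqP (P x q : nat) : 0 < P -> (x %/ P == q) = (q * P <= x < q * P + P).
Proof.
move=> P0; rewrite eqn_leq leq_divRL // andbC.
have -> : (x %/ P <= q) = (x < q * P + P) by rewrite -ltnS ltn_divLR // mulSn addnC.
by [].
Qed.

Lemma div_mono N v w k l : k <= l -> v %/ N^k == w %/ N^k -> v %/ N^l == w %/ N^l.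
Proof. by move=> kl /eqP e; rewrite -(subnKC kl) expnD !divnMA e. Qed.

Lemma bigmin_le_seq (I : eqType) (r : seq I) (P : pred I) (F : I -> nat) x j :
  j \in r -> P j -> \big[minn/x]_(i <- r | P i) F i <= F j.
Proof.
elim: r => // a r IH; rewrite inE big_cons => /orP[/eqP<- ->|jr Pj].
  by rewrite geq_minl.
case: (P a); last exact: IH.
by rewrite geq_min (IH jr Pj) orbT.
Qed.

Lemma hdist_le N n v w l : 0 < N -> v < N^n -> w < N^n -> l <= n ->
  (hdist N n v w <= l) = (v %/ N^l == w %/ N^l).
Proof.
move=> N0 vn wn ln; rewrite /hdist; apply/idP/idP.
- apply: (big_ind (fun x => x <= l -> v %/ N ^ l == w %/ N ^ l)).
  + move=> nl. have -> : l = n by apply/eqP; rewrite eqn_leq ln nl.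
    by rewrite !divn_small.
  + by move=> x y hx hy; rewrite geq_min => /orP[/hx|/hy].
  + move=> i hi il; exact: div_mono il hi.
- move=> h. have lt : l < n.+1 by rewrite ltnS.
  have := @bigmin_le_seq _ (index_enum (ordinal n.+1))
    (fun k : 'I_n.+1 => v %/ N ^ k == w %/ N ^ k) (fun k : 'I_n.+1 => (k : nat)) n (Ordinal lt).
  by rewrite mem_index_enum /= => /(_ isT h).
Qed.

Lemma hdist_len N n v w : 0 < N -> v < N^n -> w < N^n -> hdist N n v w <= n.
Proof. by move=> N0 vn wn; rewrite hdist_le // !divn_small. Qed.

Lemma sum_range (M a b : nat) : a <= b <= M ->
  \sum_(0 <= v < M) ((a <= v < b) : nat) = b - a.
Proof.
move=> /andP[ab bM].
rewrite (@big_cat_nat _ _ _ a 0 M _ _ (leq0n a) (leq_trans ab bM)) /=.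
rewrite (@big_cat_nat _ _ _ b a M _ _ ab bM) /=.
rewrite (@eq_big_nat _ _ _ 0 a _ (fun=> 0)); last first.
  by move=> i /andP[_ ia]; rewrite leqNgt ia.
rewrite (@eq_big_nat _ _ _ a b _ (fun=> 1)); last first.
  by move=> i /andP[-> ->].
rewrite (@eq_big_nat _ _ _ b M _ (fun=> 0)); last first.
  by move=> i /andP[bi _]; rewrite ltnNge bi andbF.
by rewrite !sum_nat_const_nat !muln0 muln1 addn0.
Qed.

Lemma count_cut (M P k : nat) : 0 < P -> P %| M -> k <= M ->
  \sum_(0 <= v < M) \sum_(0 <= w < M)
     (((v < k) && (k <= w) && (v %/ P == w %/ P)) : nat)
  = (k %% P) * (P - k %% P).
Proof.
move=> P0 PM kM.
set q := k %/ P; set r := k %% P.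
have kq : k = q * P + r by rewrite /q /r -divn_eq.
have rP : r < P by rewrite /r ltn_pmod.
have e : forall v w, (((v < k) && (k <= w) && (v %/ P == w %/ P)) : nat) =
   (((v < k) && (v %/ P == q)) : nat) * (((k <= w) && (w %/ P == q)) : nat).
  move=> v w; rewrite mulnb; congr (nat_of_bool _).
  case vk: (v < k) => //=; case kw: (k <= w); rewrite /= ?andbF //.
  have h1 : v %/ P <= q by apply: leq_div2r; apply: ltnW.
  have h2 : q <= w %/ P by apply: leq_div2r.
  apply/eqP/andP => [ev|[/eqP e1 /eqP e2]]; last by rewrite e1 e2.
  split; apply/eqP; first by apply/eqP; rewrite eqn_leq h1 ev h2.
  by apply/eqP; rewrite eqn_leq h2 -ev h1.
rewrite (eq_bigr (fun v => (((v < k) && (v %/ P == q)) : nat) *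
   \sum_(0 <= w < M) (((k <= w) && (w %/ P == q)) : nat))); last first.
  by move=> v _; rewrite big_distrr /=; apply: eq_bigr => w _; exact: e.
rewrite -big_distrl /=.
have ea : \sum_(0 <= v < M) (((v < k) && (v %/ P == q)) : nat) = r.
  rewrite (@eq_big_nat _ _ _ 0 M _ (fun v => ((q * P <= v < k) : nat))).
    by rewrite sum_range; [lia | apply/andP; split; lia].
  move=> v _; rewrite divn_eqP //; congr (nat_of_bool _).
  case: (leqP (q * P) v) => /=; [|by rewrite andbF].
  case: (ltnP v k) => //= vk; first by lia.
rewrite ea.
case: (posnP r) => [->|r0]; first by rewrite mul0n.
congr (_ * _).
have qM : q * P + P <= M.
  case/dvdnP: PM => t Mt.
  have kM' : k < M.
    rewrite ltn_neqAle kM andbT; apply/eqP => kM2.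
    move: r0; rewrite /r kM2 Mt modnMl. by [].
  have : q < t by rewrite /q ltn_divLR // -Mt.
  by move=> qt; rewrite Mt -mulSnr leq_mul2r qt orbT.
rewrite (@eq_big_nat _ _ _ 0 M _ (fun w => ((k <= w < q * P + P) : nat))).
  by rewrite sum_range; [lia | apply/andP; split; lia].
move=> w _; rewrite divn_eqP //; congr (nat_of_bool _).
case: (leqP k w) => /= kw //.
have -> : q * P <= w by lia.
by [].
Qed.

End NatAux.


Section Real.
Variables (R : realFieldType) (N n : nat) (Jt : R).
Hypothesis hN : (2 <= N)%N.

Definition EE (l : nat) : R := if (l <= n)%N then coupling N Jt l else 0.
Definition cc (l : nat) : R := EE l - EE l.+1.
Definition gg (l k : nat) : R := (k %% N^l)%:R * ((N^l)%:R - (k %% N^l)%:R).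
Definition GG (k : nat) : R := \sum_(0 <= l < n.+1) cc l * gg l k.

Lemma Npos : 0 < (N%:R : R).
Proof. by rewrite ltr0n; lia. Qed.

Lemma N0r : (N%:R : R) != 0.
Proof. by rewrite pnatr_eq0; lia. Qed.

Lemma NX0 l : ((N ^ l)%:R : R) != 0.
Proof. by rewrite natrX expf_neq0 // N0r. Qed.

Lemma cpl_S l : coupling N Jt l.+1 = coupling N Jt l / N%:R.
Proof. by rewrite /coupling exprSr invfM mulrA. Qed.

Lemma cpl_mul l : coupling N Jt l * (N^l)%:R = Jt.
Proof. by rewrite /coupling natrX divfK // -natrX NX0. Qed.

Lemma sum_cc j : (j <= n)%N -> \sum_(j <= l < n.+1) cc l = coupling N Jt j.
Proof.
move=> jn.
have -> : \sum_(j <= l < n.+1) cc l = - \sum_(j <= l < n.+1) (EE l.+1 - EE l).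
  by rewrite -sumrN; apply: eq_bigr => l _; rewrite /cc opprB.
rewrite telescope_sumr; last by lia.
by rewrite /EE ltnn jn sub0r opprK.
Qed.

Lemma cc_mulN l : (l < n)%N -> cc l * (N^l)%:R = Jt - Jt / N%:R.
Proof.
move=> ln; rewrite /cc /EE ltnW // ln cpl_S mulrBl cpl_mul.
by rewrite mulrAC cpl_mul.
Qed.

Lemma cc_mulNn : cc n * (N^n)%:R = Jt.
Proof. by rewrite /cc /EE leqnn ltnn subr0 cpl_mul. Qed.

Lemma sum_ccN j : (j <= n)%N ->
  \sum_(j <= l < n.+1) cc l * (N^l)%:R = (n%:R - j%:R) * (Jt - Jt / N%:R) + Jt.
Proof.
move=> jn; have -> : j = (n - (n - j))%N by lia.
elim: (n - j)%N (leq_subr j n) => [|i IH] ilt.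
  by rewrite subn0 big_nat1 cc_mulNn subrr mul0r add0r.
rewrite big_ltn; last by lia.
have -> : (n - i.+1).+1 = (n - i)%N by lia.
rewrite IH; last by lia.
rewrite cc_mulN; last by lia.
rewrite !natrB; try lia.
rewrite -[i.+1]addn1 natrD. ring.
Qed.

Lemma J_decomp d : (d <= n)%N ->
  coupling N Jt d = \sum_(0 <= l < n.+1) (d <= l)%:R * cc l.
Proof.
move=> dn.
rewrite (@big_cat_nat _ _ _ d 0 n.+1) //=; last by lia.
rewrite (@eq_big_nat _ _ _ 0 d _ (fun=> 0)); last first.
  by move=> i /andP[_ id]; rewrite leqNgt id mul0r.
rewrite big1 // add0r -sum_cc //.
by apply: eq_big_nat => i /andP[di _]; rewrite di mul1r.
Qed.

Lemma cc_ge0 l : 0 <= Jt -> 0 <= cc l.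
Proof.
move=> J0; rewrite /cc /EE.
have c0 : forall k, 0 <= coupling N Jt k.
  by move=> k; rewrite /coupling divr_ge0 // exprn_ge0 // ler0n.
case: (ltngtP l n) => ln.
- rewrite cpl_S subr_ge0 ler_pdivrMr ?Npos //.
  rewrite ler_peMr // ?c0 // ler1n; lia.
- by rewrite subrr.
- by rewrite subr0.
Qed.

End Real.


Section Ham.
Variables (R : realFieldType) (N n : nat) (Jt : R).
Hypothesis hN : (2 <= N)%N.

Lemma count_nat (l k : nat) : (l <= n)%N -> (k <= N ^ n)%N ->
  \sum_(v < N ^ n) \sum_(w < N ^ n | (v < w)%N)
     (((v %/ N ^ l == w %/ N ^ l) && ((v < k) && (k <= w)))%N : nat)
  = ((k %% N ^ l) * (N ^ l - k %% N ^ l))%N.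
Proof.
move=> ln kM.
rewrite -(@count_cut (N ^ n)) //; last 2 first.
- by rewrite expn_gt0; apply/orP; left; lia.
- by rewrite dvdn_exp2l.
rewrite big_mkord; apply: eq_bigr => v _.
rewrite big_mkord big_mkcond /=; apply: eq_bigr => w _.
case: (ltnP v w) => vw; first by rewrite andbC.
case: (ltnP v k) => //= vk; case: (leqP k w) => //= kw; lia.
Qed.

Lemma count_real (l k : nat) : (l <= n)%N -> (k <= N ^ n)%N ->
  \sum_(v < N ^ n) \sum_(w < N ^ n | (v < w)%N)
     (((v %/ N ^ l == w %/ N ^ l) && ((v < k) && (k <= w)))%N : nat)%:R
  = gg R N l k.
Proof.
move=> ln kM.
rewrite /gg -natrB; last by apply: ltnW; rewrite ltn_pmod // expn_gt0; apply/orP; left; lia.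
rewrite -natrM -(count_nat _ _ ln kM) natr_sum.
by apply: eq_bigr => v _; rewrite natr_sum.
Qed.

Lemma cut_eq k : (k <= N ^ n)%N ->
  GG R N n Jt k = \sum_(v < N ^ n) \sum_(w < N ^ n | (v < w)%N)
     coupling N Jt (hdist N n v w) * (((v < k) && (k <= w))%N : nat)%:R.
Proof.
move=> kM; symmetry.
have N0 : (0 < N)%N by lia.
transitivity (\sum_(v < N ^ n) \sum_(w < N ^ n | (v < w)%N) \sum_(0 <= l < n.+1)
   cc R N n Jt l * (((v %/ N ^ l == w %/ N ^ l) && ((v < k) && (k <= w)))%N : nat)%:R).
  apply: eq_bigr => v _; apply: eq_bigr => w _.
  rewrite (@J_decomp R N n Jt hN _ (@hdist_len N n v w N0 (ltn_ord v) (ltn_ord w))) mulr_suml.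
  apply: eq_big_nat => l /andP[_ ln].
  rewrite (@hdist_le N n v w l N0 (ltn_ord v) (ltn_ord w)); last by lia.
  by rewrite -!mulnb !natrM; ring.
rewrite (eq_bigr (fun v : 'I_(N ^ n) => \sum_(0 <= l < n.+1) \sum_(w < N ^ n | (v < w)%N)
   cc R N n Jt l * (((v %/ N ^ l == w %/ N ^ l) && ((v < k) && (k <= w)))%N : nat)%:R));
  last by move=> v _; exact: exchange_big.
rewrite exchange_big /GG; apply: eq_big_nat => l /andP[_ ln].
rewrite -(count_real _ _ ln kM) mulr_sumr; apply: eq_bigr => v _.
by rewrite mulr_sumr.
Qed.

Definition SS0 : R := \sum_(v < N ^ n) \sum_(w < N ^ n | (v < w)%N)
   coupling N Jt (hdist N n v w).

Lemma ham_formula (h : R) k : (k <= N ^ n)%N ->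
  @hamiltonian R N n Jt h (@gamma R N n k) =
  -(1/2) * SS0 + GG R N n Jt k - h * k%:R + h / 2 * (N ^ n)%:R.
Proof.
move=> kM; rewrite /hamiltonian.
have e1 : \sum_(v < N ^ n) \sum_(w < N ^ n | (v < w)%N)
   coupling N Jt (hdist N n v w) * @gamma R N n k v * @gamma R N n k w
   = SS0 - 2 * GG R N n Jt k.
  rewrite cut_eq // /SS0 mulr_sumr -sumrB; apply: eq_bigr => v _.
  rewrite mulr_sumr -sumrB; apply: eq_bigr => w vw; rewrite /gamma.
  case: (ltnP v k) => vk; case: (ltnP w k) => wk /=.
  - by ring.
  - by ring.
  - lia.
  - by ring.
have e2 : \sum_(v < N ^ n) @gamma R N n k v = 2 * k%:R - (N ^ n)%:R.
  rewrite /gamma.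
  transitivity (\sum_(v < N ^ n) (2 * (((v < k)%N : nat)%:R : R) - 1)).
    by apply: eq_bigr => v _; case: (v < k)%N; rewrite /=; ring.
  rewrite sumrB sumr_const card_ord -mulr_sumr -natr_sum.
  have := sum_range (N ^ n) 0 k; rewrite big_mkord /= => ->; last by rewrite kM.
  by rewrite subn0.
rewrite e1 e2; lra.
Qed.

End Ham.


Section Ineq.
Variables (R : realFieldType) (N n : nat) (Jt : R).
Hypothesis hN : (2 <= N)%N.
Hypothesis hJ : 0 < Jt.

Let GGk := GG R N n Jt.
Let ggk := gg R N.
Let cck := cc R N n Jt.

Lemma G_cmp (k1 k2 j : nat) (X : R) : (j <= n)%N ->
  (forall l, (l <= j)%N -> (k1 %% N ^ l = k2 %% N ^ l)%N) ->
  (forall l, (j < l <= n)%N -> ggk l k1 - ggk l k2 <= (k1%:R - k2%:R) * ((N ^ l)%:R - X)) ->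
  GGk k1 - GGk k2 <= (k1%:R - k2%:R) * \sum_(j.+1 <= l < n.+1) cck l * ((N ^ l)%:R - X).
Proof.
move=> jn e hb.
rewrite /GGk /GG -sumrB.
rewrite (@big_cat_nat _ _ _ j.+1 0 n.+1) //=.
rewrite (@eq_big_nat _ _ _ 0 j.+1 _ (fun=> 0)); last first.
  by move=> i /andP[_ ij]; rewrite /gg e ?subrr //; lia.
rewrite sumr_const_nat mul0rn add0r mulr_sumr; apply: ler_sum_nat => i /andP[ji ilt].
rewrite -mulrBr mulrCA; apply: ler_wpM2l; first by apply: (cc_ge0 R N n Jt hN); exact: ltW.
by apply: hb; lia.
Qed.

Lemma cplj j : (N ^ j)%:R * coupling N Jt j.+1 = Jt / N%:R.
Proof. by rewrite (cpl_S R N Jt) mulrC mulrAC (cpl_mul R N Jt hN). Qed.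

Lemma SumX j (c : R) : (j < n)%N ->
  \sum_(j.+1 <= l < n.+1) cck l * ((N ^ l)%:R - c * (N ^ j)%:R) =
  (n%:R - j%:R - 1) * (Jt - Jt / N%:R) + Jt - c * (Jt / N%:R).
Proof.
move=> jn.
under eq_bigr => l _ do rewrite mulrBr.
rewrite sumrB (sum_ccN R N n Jt hN) //.
rewrite -mulr_suml (sum_cc R N n Jt hN) // -(cplj j).
by rewrite -addn1 natrD; ring.
Qed.

Lemma u_le : Jt / N%:R <= Jt.
Proof.
rewrite ler_pdivrMr ?(Npos R N hN) //.
by rewrite ler_peMr ?ltW // ltr1n; lia.
Qed.

Lemma u_ge0 : 0 <= Jt / N%:R.
Proof. by rewrite divr_ge0 ?ltW // ?(Npos R N hN). Qed.

Lemma NuJ : N%:R * (Jt / N%:R) = Jt.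
Proof. by rewrite mulrC divfK // (N0r R N hN). Qed.

Lemma hfieldE m s : hfield N n Jt m s =
  (n%:R - m%:R) * (Jt - Jt / N%:R) - (s%:R - 1) * (Jt / N%:R).
Proof.
rewrite /hfield.
have := N0r R N hN; move: (N%:R : R) => x x0.
by field.
Qed.

Lemma GG0 : GGk 0 = 0.
Proof. by rewrite /GGk /GG big1 // => l _; rewrite /gg mod0n mul0r mulr0. Qed.

Lemma GG1 : GGk 1 = n%:R * (Jt - Jt / N%:R).
Proof.
rewrite /GGk /GG big_ltn // /gg expn0 modn1 mul0r mulr0 add0r.
rewrite (@eq_big_nat _ _ _ 1 n.+1 _ (fun l => cck l * ((N ^ l)%:R - 1 * (N ^ 0)%:R))).
  case: (posnP n) => [n0|n0].
    by rewrite n0 big_geq // mul0r.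
  rewrite (SumX 0 1 n0); ring.
move=> l /andP[l1 _]; rewrite modn_small ?expn0 ?mul1r //.
by rewrite -{1}(expn0 N) ltn_exp2l //; lia.
Qed.

Lemma termR (k r k' P Q : R) : 0 <= Q -> 0 <= k' -> r <= k -> Q <= P -> Q + k' <= r ->
  r * (P - r) - k' * (P - k') <= (k - k') * (P - Q).
Proof.
move=> Q0 k0 rk QP h.
rewrite -subr_ge0.
have -> : (k - k') * (P - Q) - (r * (P - r) - k' * (P - k')) =
   (k - r) * (P - Q) + (r - k') * (r + k' - Q) by ring.
by apply: addr_ge0; apply: mulr_ge0; rewrite subr_ge0 //; lra.
Qed.

Lemma termB (k k2 P X : R) : k2 <= k -> X <= k + k2 ->
  k * (P - k) - k2 * (P - k2) <= (k - k2) * (P - X).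
Proof.
move=> h1 h2; rewrite -subr_ge0.
have -> : (k - k2) * (P - X) - (k * (P - k) - k2 * (P - k2)) =
   (k - k2) * (k + k2 - X) by ring.
by apply: mulr_ge0; rewrite subr_ge0 //; lra.
Qed.

Lemma stepA (m s k : nat) : (m < n)%N -> (1 <= s <= N)%N ->
  GGk k - hfield N n Jt m s * k%:R <=
  GGk (k %% N ^ m.+1) - hfield N n Jt m s * (k %% N ^ m.+1)%:R.
Proof.
move=> mn /andP[s1 sN].
have N0 : (0 < N)%N by lia.
set j := m.+1; set k' := (k %% N ^ j)%N; set h := hfield N n Jt m s.
have Q0 : (0 < N ^ j)%N by rewrite expn_gt0 N0.
have kk : (k' <= k)%N by rewrite leq_mod.
have hb : GGk k - GGk k' <= (k%:R - k'%:R) *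
    \sum_(j.+1 <= l < n.+1) cck l * ((N ^ l)%:R - 1 * (N ^ j)%:R).
  apply: G_cmp => //.
    by move=> l lj; rewrite /k' modn_dvdm // dvdn_exp2l.
  move=> l /andP[jl ln].
  have QP : (N ^ j <= N ^ l)%N by rewrite leq_pexp2l // ltnW.
  have k'P : (k' %% N ^ l = k')%N.
    by rewrite modn_small // (leq_trans _ QP) // ltn_pmod.
  set r := (k %% N ^ l)%N.
  have rQ : (r %% N ^ j = k')%N by rewrite /r /k' modn_dvdm // dvdn_exp2l // ltnW.
  have rk : (r <= k)%N by rewrite leq_mod.
  rewrite /ggk /gg -/r k'P mul1r.
  case: (posnP (r %/ N ^ j)) => q0.
    have rk' : r = k' by rewrite (divn_eq r (N ^ j)) q0 mul0n add0n rQ.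
    rewrite rk' subrr; apply: mulr_ge0; rewrite subr_ge0 ler_nat //.
  apply: termR; rewrite ?ler0n ?ler_nat //.
  rewrite -natrD ler_nat.
  by rewrite {1}(divn_eq r (N ^ j)) rQ leq_add2r leq_pmull.
have u0 := u_ge0. have uJ := u_le. have NJ := NuJ.
have sJ : s%:R * (Jt / N%:R) <= Jt by rewrite -{2}NJ ler_wpM2r // ler_nat.
have hS : \sum_(j.+1 <= l < n.+1) cck l * ((N ^ l)%:R - 1 * (N ^ j)%:R) <= h.
  rewrite /h hfieldE.
  case: (ltnP j n) => jn.
    rewrite SumX // /j -addn1 natrD.
    rewrite -subr_ge0.
    move: sJ; set u := Jt / N%:R => sJ.
    have -> : (n%:R - m%:R) * (Jt - u) - (s%:R - 1) * u -
      ((n%:R - (m%:R + 1%:R) - 1) * (Jt - u) + Jt - 1 * u) = Jt - s%:R * u by ring.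
    by rewrite subr_ge0.
  have nj : n = j by lia.
  rewrite big_geq; last by lia.
  have -> : n%:R = m%:R + 1 :> R by rewrite nj /j -addn1 natrD.
  move: sJ; set u := Jt / N%:R => sJ.
  rewrite -subr_ge0.
  have -> : (m%:R + 1 - m%:R) * (Jt - u) - (s%:R - 1) * u - 0 = Jt - s%:R * u by ring.
  by rewrite subr_ge0.
have dk : 0 <= k%:R - k'%:R :> R by rewrite subr_ge0 ler_nat.
have hm := ler_wpM2l dk hS.
rewrite -subr_ge0.
have -> : GGk k' - h * k'%:R - (GGk k - h * k%:R) =
   h * (k%:R - k'%:R) - (GGk k - GGk k') by ring.
rewrite subr_ge0; apply: le_trans hb _.
by rewrite [h * _]mulrC.
Qed.

Lemma stepB (m s k : nat) : (m < n)%N -> (1 <= s <= N)%N ->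
  (k < N ^ m.+1)%N -> (s * N ^ m <= k)%N ->
  GGk k - hfield N n Jt m s * k%:R <=
  GGk (s.-1 * N ^ m + k %% N ^ m) -
    hfield N n Jt m s * (s.-1 * N ^ m + k %% N ^ m)%:R.
Proof.
move=> mn /andP[s1 sN] kM sk.
have N0 : (0 < N)%N by lia.
set Q := (N ^ m)%N; set k2 := (s.-1 * Q + k %% Q)%N; set h := hfield N n Jt m s.
have Q0 : (0 < Q)%N by rewrite expn_gt0 N0.
have kQ : (k %% Q < Q)%N by rewrite ltn_pmod.
have sQ : (s * Q = s.-1 * Q + Q)%N by rewrite -mulSnr prednK.
have k2s : (k2 < s * Q)%N by rewrite /k2; lia.
have k2k : (k2 <= k)%N by lia.
have k2l : (s.-1 * Q <= k2)%N by rewrite /k2 leq_addr.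
have hb : GGk k - GGk k2 <= (k%:R - k2%:R) *
    \sum_(m.+1 <= l < n.+1) cck l * ((N ^ l)%:R - (s%:R * 2 - 1) * Q%:R).
  apply: G_cmp; first by apply: ltnW.
    move=> l lm; rewrite /k2.
    have -> : Q = (N ^ (m - l) * N ^ l)%N by rewrite -expnD subnK.
    rewrite mulnA modnMDl modn_dvdm //.
    by apply: dvdn_mull.
  move=> l /andP[ml ln].
  have QP : (N ^ m.+1 <= N ^ l)%N by rewrite leq_pexp2l.
  rewrite /ggk /gg !modn_small; [ | lia | lia ].
  apply: termB; first by rewrite ler_nat.
  have h1 : (s * Q)%:R <= k%:R :> R by rewrite ler_nat.
  have h2 : (s.-1 * Q)%:R <= k2%:R :> R by rewrite ler_nat.
  move: h1 h2; rewrite !natrM -subn1 natrB // => h1 h2.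
  nra.
have u0 := u_ge0. have uJ := u_le. have NJ := NuJ.
have hS : \sum_(m.+1 <= l < n.+1) cck l * ((N ^ l)%:R - (s%:R * 2 - 1) * Q%:R) <= h.
  rewrite /h hfieldE SumX //.
  move: u0; set u := Jt / N%:R => u0.
  rewrite -subr_ge0.
  have -> : (n%:R - m%:R) * (Jt - u) - (s%:R - 1) * u -
      ((n%:R - m%:R - 1) * (Jt - u) + Jt - (s%:R * 2 - 1) * u) = (s%:R - 1) * u by ring.
  by apply: mulr_ge0; rewrite // subr_ge0 ler1n.
have dk : 0 <= k%:R - k2%:R :> R by rewrite subr_ge0 ler_nat.
have hm := ler_wpM2l dk hS.
rewrite -subr_ge0.
have -> : GGk k2 - h * k2%:R - (GGk k - h * k%:R) =
   h * (k%:R - k2%:R) - (GGk k - GGk k2) by ring.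
rewrite subr_ge0; apply: le_trans hb _.
by rewrite [h * _]mulrC.
Qed.

Lemma step0 (m s : nat) : (1 <= s)%N ->
  GGk 0 - hfield N n Jt m s * 0%:R <= GGk 1 - hfield N n Jt m s * 1%:R.
Proof.
move=> s1.
rewrite GG0 GG1 hfieldE mulr0 mulr1 subr0 -subr_ge0.
have u0 := u_ge0. have uJ := u_le.
move: u0 uJ; set u := Jt / N%:R => u0 uJ.
have -> : n%:R * (Jt - u) - ((n%:R - m%:R) * (Jt - u) - (s%:R - 1) * u) - 0 =
  m%:R * (Jt - u) + (s%:R - 1) * u by ring.
apply: addr_ge0; apply: mulr_ge0; rewrite ?ler0n ?subr_ge0 ?ler1n //.
Qed.

End Ineq.


Lemma max_ub_seq (R : realFieldType) (F : nat -> R) x0 (r : seq nat) j :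
  j \in r -> F j <= \big[Num.max/x0]_(i <- r) F i.
Proof.
elim: r => // a r IH; rewrite inE big_cons => /orP[/eqP->|jr].
  by rewrite le_max lexx.
by rewrite le_max (IH jr) orbT.
Qed.

Lemma max_lub_seq (R : realFieldType) (F : nat -> R) x0 (r : seq nat) y :
  x0 <= y -> (forall i, i \in r -> F i <= y) ->
  \big[Num.max/x0]_(i <- r) F i <= y.
Proof.
move=> hx; elim: r => [|a r IH] hr; first by rewrite big_nil.
rewrite big_cons ge_max hr ?inE ?eqxx // IH // => i ir.
by apply: hr; rewrite inE ir orbT.
Qed.

Theorem lemma4p3 (R : realFieldType) (N n : nat) (Jt : R)
    (hN : (2 <= N)%N) (hn : (1 <= n)%N) (hJ : 0 < Jt)
    (s m : nat) (hs1 : (1 <= s)%N) (hs2 : (s <= N)%N) (hm : (m <= n.-1)%N) :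
  maxH N n Jt (hfield N n Jt m s) 1 (N ^ n) =
  maxH N n Jt (hfield N n Jt m s) 1 (s * N ^ m).
Proof.
set h := hfield N n Jt m s.
set H := fun i => @hamiltonian R N n Jt h (@gamma R N n i).
have mn : (m < n)%N by lia.
have N0 : (0 < N)%N by lia.
have QM : (s * N ^ m <= N ^ n)%N.
  apply: (@leq_trans (N * N ^ m)); first by rewrite leq_mul2r hs2 orbT.
  by rewrite -expnS leq_pexp2l.
have Q0 : (0 < N ^ m)%N by rewrite expn_gt0 N0.
have sQ1 : (1 <= s * N ^ m)%N by rewrite muln_gt0 hs1 Q0.
have key : forall i, (1 <= i <= N ^ n)%N ->
    exists2 i', (1 <= i' <= s * N ^ m)%N & H i <= H i'.
  move=> i /andP[i1 iM].
  have Hf : forall k, (k <= N ^ n)%N -> H k =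
      (-(1/2) * SS0 R N n Jt + h / 2 * (N ^ n)%:R) + (GG R N n Jt k - h * k%:R).
    by move=> k kM; rewrite /H (ham_formula R N n Jt hN) //; ring.
  suff [i' /andP[a b] c] : exists2 i', (1 <= i' <= s * N ^ m)%N &
      GG R N n Jt i - h * i%:R <= GG R N n Jt i' - h * i'%:R.
    exists i'; first by rewrite a b.
    by rewrite !Hf // ?lerD2l // (leq_trans b QM).
  set k1 := (i %% N ^ m.+1)%N.
  have A := stepA R N n Jt hN hJ m s i mn (introT andP (conj hs1 hs2)).
  have k1M : (k1 < N ^ m.+1)%N by rewrite ltn_pmod // expn_gt0 N0.
  have [k2 [k2le hk2]] : exists k2, (k2 < s * N ^ m)%N /\
      GG R N n Jt i - h * i%:R <= GG R N n Jt k2 - h * k2%:R.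
    case: (leqP (s * N ^ m) k1) => sk.
      exists (s.-1 * N ^ m + k1 %% N ^ m)%N; split.
        have sQ : (s * N ^ m = s.-1 * N ^ m + N ^ m)%N by rewrite -mulSnr prednK.
        have : (k1 %% N ^ m < N ^ m)%N by rewrite ltn_pmod.
        lia.
      apply: le_trans A _.
      exact: (stepB R N n Jt hN hJ m s k1 mn (introT andP (conj hs1 hs2)) k1M sk).
    by exists k1; split.
  case: (posnP k2) => k20.
    exists 1%N; first by rewrite leqnn sQ1.
    apply: le_trans hk2 _; rewrite k20.
    exact: (step0 R N n Jt hN hJ m s hs1).
  exists k2 => //; rewrite k20 /=; exact: ltnW.
rewrite /maxH -/h -/H.
apply: le_anti; apply/andP; split.
- apply: max_lub_seq.
    by apply: max_ub_seq; rewrite mem_index_iota leqnn ltnS.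
  move=> i; rewrite mem_index_iota ltnS => ib.
  have [i' hi' le] := key i ib.
  apply: le_trans le _; apply: max_ub_seq.
  by rewrite mem_index_iota ltnS.
- apply: max_lub_seq.
    by apply: max_ub_seq; rewrite mem_index_iota leqnn ltnS expn_gt0 N0.
  move=> i; rewrite mem_index_iota ltnS => /andP[i1 iQ].
  apply: max_ub_seq.
  by rewrite mem_index_iota ltnS i1 (leq_trans iQ QM).
Qed.
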